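(* Let $R$ be a Noetherian domain of prime characteristic $p>0$, and let $S\supseteq R$ be a domain that is finitely generated as an $R$-module. If tight closure commutes with localization in $S$, then tight closure commutes with localization in $R$.
   Context: All rings are commutative and Noetherian of prime characteristic $p>0$. For an ideal $I$ of a ring $A$ and $q=p^e$, $I^{[q]}$ denotes the ideal generated by $\{x^q : x\in I\}$. The tight closure $I^*$ of $I$ is the set of $z\in A$ for which there exists $c\in A$, not in any minimal prime of $A$, with $c z^q\in I^{[q]}$ for all $q=p^e \gg 0$. We say tight closure commutes with localization in $A$ if for every ideal $I$ of $A$ and every multiplicative system $U\subseteq A$, one has $I^*A[U^{-1}] = (IA[U^{-1}])^*$, where the right side is the tight closure in the ring $A[U^{-1}]$. *)

(* Defs.v *)
From HB Require Import structures.
From mathcomp Require Import all_boot all_order all_algebra.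
From mathcomp Require Import fraction.
Set Implicit Arguments. Unset Strict Implicit. Unset Printing Implicit Defensive.
Import GRing.Theory.
Local Open Scope ring_scope.

(* Sets are predicates K -> Prop.  All ideal-theoretic notions are stated for
   a subring B (a predicate) of an ambient commutative ring K.  A ring A itself
   is the case K = A, B = whole (everything). *)

Definition whole (K : Type) : K -> Prop := fun _ => True.

Definition gen (K : comNzRingType) (B X : K -> Prop) (z : K) : Prop :=
  exists n (b x : 'I_n -> K),
    (forall i, B (b i) /\ X (x i)) /\ z = \sum_(i < n) b i * x i.

Definition is_ideal (K : comNzRingType) (B I : K -> Prop) : Prop :=
  (forall x, I x -> B x) /\ I 0 /\
  (forall x y, I x -> I y -> I (x + y)) /\
  (forall b x, B b -> I x -> I (b * x)).

Definition frob (K : comNzRingType) (B I : K -> Prop) (q : nat) : K -> Prop :=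
  gen B (fun y => exists x, I x /\ y = x ^+ q).

Definition is_prime (K : comNzRingType) (B P : K -> Prop) : Prop :=
  is_ideal B P /\ ~ P 1 /\
  (forall a b, B a -> B b -> P (a * b) -> P a \/ P b).

Definition minimal_prime (K : comNzRingType) (B P : K -> Prop) : Prop :=
  is_prime B P /\
  (forall Q, is_prime B Q -> (forall x, Q x -> P x) -> forall x, P x -> Q x).

Definition tight_closure (p : nat) (K : comNzRingType) (B I : K -> Prop)
    (z : K) : Prop :=
  B z /\ exists c, B c /\ (forall P, minimal_prime B P -> ~ P c) /\
    exists e0, forall e, (e0 <= e)%N -> frob B I (p ^ e) (c * z ^+ (p ^ e)).

Definition mult_system (A : comNzRingType) (U : A -> Prop) : Prop :=
  U 1 /\ (forall u v, U u -> U v -> U (u * v)).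

(* localization A[U^-1] of a domain A, realised inside its fraction field
   (for a multiplicative system U not containing 0) *)
Definition loc (A : idomainType) (U : A -> Prop) : {fraction A} -> Prop :=
  fun x => exists a u, U u /\ x = (FracField.tofrac a) / (FracField.tofrac u).

Definition fimg (A : idomainType) (X : A -> Prop) : {fraction A} -> Prop :=
  fun y => exists x, X x /\ y = FracField.tofrac x.

(* tight closure commutes with localization in the domain A:
   I^* A[U^-1] = (I A[U^-1])^*  for every ideal I and multiplicative system U *)
Definition tc_commutes_with_loc (p : nat) (A : idomainType) : Prop :=
  forall (I U : A -> Prop), is_ideal (@whole A) I -> mult_system U -> ~ U 0 ->
  forall y : {fraction A},
    gen (loc U) (fimg (tight_closure p (@whole A) I)) y <->
    tight_closure p (loc U) (gen (loc U) (fimg I)) y.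

Definition noetherian (A : comNzRingType) : Prop :=
  forall I : A -> Prop, is_ideal (@whole A) I ->
  exists n (g : 'I_n -> A),
    forall x, I x <-> gen (@whole A) (fun y => exists i, y = g i) x.

Definition module_finite (R S : comNzRingType) (f : R -> S) : Prop :=
  exists n (s : 'I_n -> S), forall x : S,
    exists r : 'I_n -> R, x = \sum_(i < n) f (r i) * s i.

(* Main.v *)
Require Import Defs.
From HB Require Import structures.
From mathcomp Require Import all_boot all_order all_algebra.
From mathcomp Require Import fraction generic_quotient.
From mathcomp Require Import ring.
From Stdlib Require Import Classical.
Import GRing.Theory.
Set Implicit Arguments. Unset Strict Implicit. Unset Printing Implicit Defensive.
Local Open Scope ring_scope.
Local Open Scope quotient_scope.

Lemma gen_ind (K : comNzRingType) (B X P : K -> Prop) :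
  P 0 -> (forall x y, P x -> P y -> P (x + y)) ->
  (forall b x, B b -> X x -> P (b * x)) -> forall z, gen B X z -> P z.
Proof.
move=> P0 PD Pm z [n [b [x [H ->]]]].
apply: (big_ind P) => // i _; case: (H i) => *; exact: Pm.
Qed.

Lemma gen0 (K : comNzRingType) (B X : K -> Prop) : gen B X 0.
Proof. exists 0%N, (fun _ => 0), (fun _ => 0); split; [by case | by rewrite big_ord0]. Qed.

Lemma gen1 (K : comNzRingType) (B X : K -> Prop) b x :
  B b -> X x -> gen B X (b * x).
Proof.
move=> Bb Xx; exists 1%N, (fun _ => b), (fun _ => x); split => //.
by rewrite big_ord1.
Qed.

Lemma genD (K : comNzRingType) (B X : K -> Prop) z1 z2 :
  gen B X z1 -> gen B X z2 -> gen B X (z1 + z2).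
Proof.
move=> [n [b [x [H ->]]]] [m [b' [x' [H' ->]]]].
exists (n + m)%N, (fun i => match split i with inl j => b j | inr k => b' k end),
  (fun i => match split i with inl j => x j | inr k => x' k end); split.
  by move=> i; case: (split i) => j.
rewrite big_split_ord /=; congr (_ + _); apply: eq_bigr => i _.
  by rewrite -[lshift m i]/(unsplit (inl i)) unsplitK.
by rewrite -[rshift n i]/(unsplit (inr i)) unsplitK.
Qed.

Lemma genM (K : comNzRingType) (B X : K -> Prop) c z :
  (forall x y, B x -> B y -> B (x * y)) -> B c -> gen B X z -> gen B X (c * z).
Proof.
move=> BM Bc [n [b [x [H ->]]]].
exists n, (fun i => c * b i), x; split.
  by move=> i; case: (H i) => ??; split => //; apply: BM.
by rewrite mulr_sumr; apply: eq_bigr => i _; rewrite mulrA.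
Qed.

Lemma gen_map (K K' : comNzRingType) (B X : K -> Prop) (B' X' : K' -> Prop)
  (phi : K -> K') :
  (forall x y, phi (x + y) = phi x + phi y) -> phi 0 = 0 ->
  (forall x y, phi (x * y) = phi x * phi y) ->
  (forall b, B b -> B' (phi b)) -> (forall x, X x -> X' (phi x)) ->
  forall z, gen B X z -> gen B' X' (phi z).
Proof.
move=> pD p0 pM HB HX z [n [b [x [H ->]]]].
exists n, (fun i => phi (b i)), (fun i => phi (x i)); split.
  by move=> i; case: (H i) => ??; split; [apply: HB | apply: HX].
rewrite (big_morph phi pD p0); apply: eq_bigr => i _; exact: pM.
Qed.

Lemma zero_prime (K : idomainType) (B : K -> Prop) :
  B 0 -> is_prime B (fun x => x = 0).
Proof.
move=> B0; split; first split.
- by move=> x ->.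
- split => //; split; first by move=> x y -> ->; rewrite addr0.
  by move=> b x _ ->; rewrite mulr0.
split; first by move=> /eqP; rewrite oner_eq0.
by move=> a b _ _ /eqP; rewrite mulf_eq0 => /orP[] /eqP; [left|right].
Qed.

Lemma minprime_nz (K : idomainType) (B : K -> Prop) c :
  B 0 -> c != 0 -> forall P, minimal_prime B P -> ~ P c.
Proof.
move=> B0 c0 P [[[_ [P0 _]] _] Pmin] Pc.
have e := Pmin _ (zero_prime B0) (fun x (ex : x = 0) => eq_ind_r P P0 ex) c Pc.
by rewrite e eqxx in c0.
Qed.

Lemma nz_of_minprime (K : idomainType) (B : K -> Prop) c :
  B 0 -> (forall P, minimal_prime B P -> ~ P c) -> c != 0.
Proof.
move=> B0 H; apply/eqP => c0; apply: (H (fun x => x = 0)) c0.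
split; first exact: zero_prime.
move=> Q [[_ [Q0 _]] _] _ x ->; exact: Q0.
Qed.

Lemma frobD (K : comNzRingType) p e (x y : K) :
  p \in [pchar K] -> (x + y) ^+ (p ^ e) = x ^+ (p ^ e) + y ^+ (p ^ e).
Proof.
move=> pK; apply: exprDn_pchar; rewrite pnatX (pnatE _ (pcharf_prime pK)) pK //.
Qed.

Lemma BX (K : comNzRingType) (B : K -> Prop) :
  B 1 -> (forall x y, B x -> B y -> B (x * y)) -> forall b n, B b -> B (b ^+ n).
Proof. by move=> B1 BM b n Bb; elim: n => [|n IH]; rewrite ?expr0 ?exprS //; apply: BM. Qed.

Lemma tc0 (K : comNzRingType) p (B I : K -> Prop) :
  p \in [pchar K] -> B 0 -> B 1 -> tight_closure p B I 0.
Proof.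
move=> pK B0 B1; split => //; exists 1; split => //; split.
  by move=> P [[_ [H _]] _].
exists 0%N => e _; rewrite expr0n expn_eq0.
have -> : (p == 0%N) = false by apply/negbTE; rewrite -lt0n prime_gt0 // (pcharf_prime pK).
by rewrite mulr0; exact: gen0.
Qed.

Lemma tcD (K : comNzRingType) p (B I : K -> Prop) z1 z2 :
  p \in [pchar K] -> (forall x y, B x -> B y -> B (x + y)) ->
  (forall x y, B x -> B y -> B (x * y)) ->
  tight_closure p B I z1 -> tight_closure p B I z2 -> tight_closure p B I (z1 + z2).
Proof.
move=> pK BD BM [Bz1 [c1 [Bc1 [Hc1 [e1 He1]]]]] [Bz2 [c2 [Bc2 [Hc2 [e2 He2]]]]].
split; first exact: BD.
exists (c1 * c2); split; first exact: BM.
split.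
  move=> P HP PP; case: (HP) => [[_ [_ Hpr]] _].
  by case: (Hpr _ _ Bc1 Bc2 PP); [apply: Hc1 | apply: Hc2].
exists (maxn e1 e2) => e; rewrite geq_max => /andP [h1 h2].
rewrite frobD //.
have -> : c1 * c2 * (z1 ^+ (p ^ e) + z2 ^+ (p ^ e)) =
   c2 * (c1 * z1 ^+ (p ^ e)) + c1 * (c2 * z2 ^+ (p ^ e)) by ring.
apply: genD; apply: genM => //; [exact: He1 | exact: He2].
Qed.

Lemma tcM (K : comNzRingType) p (B I : K -> Prop) b z :
  B 1 -> (forall x y, B x -> B y -> B (x * y)) -> B b ->
  tight_closure p B I z -> tight_closure p B I (b * z).
Proof.
move=> B1 BM Bb [Bz [c [Bc [Hc [e0 He]]]]].
split; first exact: BM.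
exists c; do 2! split => //; exists e0 => e he.
rewrite exprMn mulrCA; apply: genM => //; first exact: BX.
exact: He.
Qed.

Notation tf := FracField.tofrac.

Lemma tf_neq0 (R : idomainType) (d : R) : d != 0 -> tf d != 0.
Proof. by rewrite tofrac_eq0. Qed.

Lemma pi_rep (R : idomainType) (r : {ratio R}) :
  \pi_{fraction R} r = tf \n_r / tf \d_r.
Proof.
apply: (@mulIf _ (tf \d_r)); first exact/tf_neq0/denom_ratioP.
rewrite mulfVK; last exact/tf_neq0/denom_ratioP.
unlock FracField.tofrac.
change (FracField.mul (\pi_(FracField.type R) r) (\pi_(FracField.type R) (Ratio \d_r 1)) = \pi_(FracField.type R) (Ratio \n_r 1)).
rewrite -FracField.pi_mul.
apply/eqmodP => /=.
rewrite FracField.equivfE /FracField.mulf.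
rewrite !numden_Ratio ?mulf_neq0 ?denom_ratioP ?oner_neq0 //.
by rewrite !mulr1 mulrC eqxx.
Qed.

Lemma frac_rep (R : idomainType) (x : {fraction R}) :
  exists a d, d != 0 /\ x = tf a / tf d.
Proof.
exists (\n_(repr x)), (\d_(repr x)); split; first exact: denom_ratioP.
by rewrite -pi_rep reprK.
Qed.

Definition Fm (R S : idomainType) (f : R -> S) (x : {fraction R}) : {fraction S} :=
  tf (f \n_(repr x)) / tf (f \d_(repr x)).

Lemma Fm_eq (R S : idomainType) (f : {rmorphism R -> S}) (finj : injective f) a d :
  d != 0 -> Fm f (tf a / tf d) = tf (f a) / tf (f d).
Proof.
move=> d0; rewrite /Fm.
set x := tf a / tf d.
have hx : x = tf \n_(repr x) / tf \d_(repr x) by rewrite -pi_rep reprK.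
have d'0 := denom_ratioP (repr x).
move: hx; rewrite {1}/x.
move: (\n_(repr x)) (\d_(repr x)) d'0 => n d' d'0 /eqP.
have fnz : forall r, r != 0 -> f r != 0.
  by move=> r; apply: contra => /eqP e; apply/eqP; apply: finj; rewrite e rmorph0.
rewrite eqr_div ?tf_neq0 // -!rmorphM tofrac_eq => /eqP e.
apply/eqP; rewrite eqr_div ?tf_neq0 ?fnz // -!rmorphM -e.
done.
Qed.

Section FmProps.
End FmProps.

Lemma fnz (R S : idomainType) (f : {rmorphism R -> S}) (finj : injective f) r :
  r != 0 -> f r != 0.
Proof. by apply: contra => /eqP e; apply/eqP; apply: finj; rewrite e rmorph0. Qed.

Lemma Fm_tf (R S : idomainType) (f : {rmorphism R -> S}) (finj : injective f) a :
  Fm f (tf a) = tf (f a).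
Proof.
have := Fm_eq finj a (oner_neq0 R).
by rewrite !rmorph1 !divr1.
Qed.

Lemma Fm_add (R S : idomainType) (f : {rmorphism R -> S}) (finj : injective f) x y :
  Fm f (x + y) = Fm f x + Fm f y.
Proof.
have [a [d [d0 ->]]] := frac_rep x; have [b [e [e0 ->]]] := frac_rep y.
have de0 : d * e != 0 by rewrite mulf_neq0.
have -> : tf a / tf d + tf b / tf e = tf (a * e + b * d) / tf (d * e).
  by rewrite addf_div ?tf_neq0 // rmorphD !rmorphM.
rewrite !Fm_eq //.
have fd := tf_neq0 (fnz finj d0); have fe := tf_neq0 (fnz finj e0).
by rewrite addf_div // rmorphD !rmorphM !rmorphD !rmorphM.
Qed.

Lemma Fm_mul (R S : idomainType) (f : {rmorphism R -> S}) (finj : injective f) x y :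
  Fm f (x * y) = Fm f x * Fm f y.
Proof.
have [a [d [d0 ->]]] := frac_rep x; have [b [e [e0 ->]]] := frac_rep y.
have de0 : d * e != 0 by rewrite mulf_neq0.
have -> : tf a / tf d * (tf b / tf e) = tf (a * b) / tf (d * e).
  by rewrite mulf_div !rmorphM.
rewrite !Fm_eq //.
by rewrite mulf_div !rmorphM.
Qed.

Lemma Fm0 (R S : idomainType) (f : {rmorphism R -> S}) (finj : injective f) :
  Fm f 0 = 0.
Proof. by rewrite -tofrac0 Fm_tf // rmorph0 tofrac0. Qed.

Lemma Fm1 (R S : idomainType) (f : {rmorphism R -> S}) (finj : injective f) :
  Fm f 1 = 1.
Proof. by rewrite -tofrac1 Fm_tf // rmorph1 tofrac1. Qed.

Lemma FmX (R S : idomainType) (f : {rmorphism R -> S}) (finj : injective f) x n :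
  Fm f (x ^+ n) = (Fm f x) ^+ n.
Proof.
elim: n => [|n IH]; first by rewrite !expr0 Fm1.
by rewrite !exprS Fm_mul // IH.
Qed.

Lemma Fm_nz (R S : idomainType) (f : {rmorphism R -> S}) (finj : injective f) x :
  x != 0 -> Fm f x != 0.
Proof.
have [a [d [d0 ->]]] := frac_rep x.
rewrite Fm_eq // !mulf_eq0 !invr_eq0 !tofrac_eq0 (negPf d0) (negPf (fnz finj d0)) !orbF.
exact: fnz.
Qed.

Definition span (R S : idomainType) (f : R -> S) (bs : seq S) (P : R -> Prop) (x : S) :=
  exists a : nat -> R, (forall i, P (a i)) /\ x = \sum_(i < size bs) f (a i) * bs`_i.

Definition indep (R S : idomainType) (f : R -> S) (bs : seq S) :=
  forall a : nat -> R, \sum_(i < size bs) f (a i) * bs`_i = 0 ->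
  forall i, (i < size bs)%N -> a i = 0.

Lemma sum_rcons (R S : idomainType) (f : R -> S) bs g (a : nat -> R) :
  \sum_(i < size (rcons bs g)) f (a i) * (rcons bs g)`_i =
  \sum_(i < size bs) f (a i) * bs`_i + f (a (size bs)) * g.
Proof.
rewrite size_rcons big_ord_recr /= nth_rcons ltnn eqxx; congr (_ + _).
by apply: eq_bigr => i _; rewrite nth_rcons ltn_ord.
Qed.

Lemma span_rcons (R S : idomainType) (f : {rmorphism R -> S}) bs g P x :
  P 0 -> span f bs P x -> span f (rcons bs g) P x.
Proof.
move=> P0 [a [Ha ->]].
exists (fun i => if i == size bs then 0 else a i); split.
  by move=> i; case: ifP.
rewrite (sum_rcons f bs g (fun i => if i == size bs then 0 else a i)) /=.
rewrite eqxx rmorph0 mul0r addr0; apply: eq_bigr => i _.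
by rewrite (ltn_eqF (ltn_ord i)).
Qed.

Lemma span0 (R S : idomainType) (f : {rmorphism R -> S}) bs P :
  P 0 -> span f bs P 0.
Proof.
move=> P0; exists (fun _ => 0); split => //.
by rewrite big1 // => i _; rewrite rmorph0 mul0r.
Qed.

Lemma spanD (R S : idomainType) (f : {rmorphism R -> S}) bs P x y :
  (forall u v, P u -> P v -> P (u + v)) ->
  span f bs P x -> span f bs P y -> span f bs P (x + y).
Proof.
move=> PD [a [Ha ->]] [b [Hb ->]].
exists (fun i => a i + b i); split; first by move=> i; apply: PD.
by rewrite -big_split; apply: eq_bigr => i _; rewrite rmorphD mulrDl.
Qed.

Lemma span_scale (R S : idomainType) (f : {rmorphism R -> S}) bs P Q s y :
  (forall a, P a -> Q (s * a)) -> span f bs P y -> span f bs Q (f s * y).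
Proof.
move=> PQ [a [Ha ->]].
exists (fun i => s * a i); split; first by move=> i; apply: PQ.
by rewrite mulr_sumr; apply: eq_bigr => i _; rewrite rmorphM mulrA.
Qed.

Lemma basis_ex (R S : idomainType) (f : {rmorphism R -> S}) (finj : injective f)
  (gs : seq S) (c : S) : c != 0 ->
  exists bs D, bs`_0 = c /\ (0 < size bs)%N /\ indep f bs /\ D != 0 /\
    forall g, g \in gs -> span f bs (fun _ => True) (f D * g).
Proof.
move=> c0; elim: gs => [|g gs [bs [D [h0 [hs [hind [D0 hsp]]]]]]].
  exists [:: c], 1; do 3! split => //; last by split; [exact: oner_neq0 | by []].
  move=> a; rewrite big_ord1 /= => /eqP; rewrite mulf_eq0 (negPf c0) orbF => /eqP e.
  move=> i; rewrite ltnS leqn0 => /eqP ->; apply: finj; rewrite e rmorph0 //.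
case: (classic (indep f (rcons bs g))) => Hi.
- exists (rcons bs g), D; split; first by rewrite nth_rcons hs.
  split; first by rewrite size_rcons.
  do 2! split => //.
  move=> g'; rewrite inE => /orP [/eqP -> | hg].
    exists (fun i => if i == size bs then D else 0); split => //.
    rewrite (sum_rcons f bs g (fun i => if i == size bs then D else 0)) /=.
    rewrite eqxx big1 ?add0r // => i _.
    by rewrite (ltn_eqF (ltn_ord i)) rmorph0 mul0r.
  by apply: span_rcons => //; apply: hsp.
- have [a [ha [i [hi ai]]]] : exists a : nat -> R,
      \sum_(i < size (rcons bs g)) f (a i) * (rcons bs g)`_i = 0 /\
      exists i, (i < size (rcons bs g))%N /\ a i <> 0.
    apply: NNPP => H; apply: Hi => a ha i hi; apply: NNPP => ai.
    by apply: H; exists a; split => //; exists i.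
  rewrite sum_rcons in ha.
  have al0 : a (size bs) != 0.
    apply/eqP => al; rewrite al rmorph0 mul0r addr0 in ha.
    move: hi; rewrite size_rcons ltnS leq_eqVlt => /orP [/eqP ei | hi'].
      by apply: ai; rewrite ei.
    by apply: ai; apply: (hind a ha).
  exists bs, (D * a (size bs)); do 3! split => //.
  split; first by rewrite mulf_neq0.
  move=> g'; rewrite inE => /orP [/eqP -> | hg].
    rewrite rmorphM -mulrA.
    apply: (span_scale (P := fun _ => True)) => //.
    have -> : f (a (size bs)) * g = \sum_(i < size bs) f (- a i) * bs`_i.
      apply/eqP; rewrite -subr_eq0 -addrC -sumrN.
      under eq_bigr => j _ do rewrite rmorphN mulNr opprK.
      by rewrite ha.
    by exists (fun i => - a i).
  rewrite rmorphM -mulrA mulrCA; apply: (span_scale (P := fun _ => True)) => //.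
  by apply: hsp.
Qed.

Lemma contraction p (R S : idomainType) (f : {rmorphism R -> S})
  (pR : p \in [pchar R]) (finj : injective f) (mf : module_finite f)
  (I : R -> Prop) z :
  tight_closure p (@whole S) (gen (@whole S) (fun s => exists r, I r /\ s = f r)) (f z) ->
  tight_closure p (@whole R) I z.
Proof.
move=> [_ [c [_ [Hc [e0 He]]]]].
have c0 : c != 0 by apply: (@nz_of_minprime _ (@whole S)).
have pS : p \in [pchar S] := rmorph_pchar f pR.
case: mf => n [g hg].
have [bs [D [h0 [hs [hind [D0 hsp]]]]]] := basis_ex finj (codom g) c0.
have hall : forall x, span f bs (@whole R) (f D * x).
  move=> x; case: (hg x) => r ->; rewrite mulr_sumr.
  apply: (big_ind (span f bs (@whole R))); [exact: span0 | by move=> ???; apply: spanD | ].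
  move=> i _; rewrite mulrCA; apply: (span_scale (P := @whole R)) => //.
  apply: hsp; exact: codom_f.
split => //; exists D; split => //; split; first by apply: minprime_nz.
exists e0 => e he; set q := (p ^ e)%N.
set FR := frob (@whole R) I q.
have FRD : forall u v, FR u -> FR v -> FR (u + v) by move=> ????; apply: genD.
have FR0 : FR 0 := gen0 _ _.
set P := fun w => span f bs FR (f D * w).
have P0 : P 0 by rewrite /P mulr0; apply: span0.
have PD : forall u v, P u -> P v -> P (u+v).
  by move=> u v hu hv; rewrite /P mulrDr; apply: spanD.
have Pbase : forall t r, I r -> P (t * f (r ^+ q)).
  move=> t r Ir; rewrite /P [t * _]mulrC mulrCA; apply: (span_scale (P := @whole R)); last exact: hall.
  move=> a _; rewrite mulrC; apply: gen1 => //; by exists r.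
have q0 : (0 < q)%N by rewrite expn_gt0 prime_gt0 // (pcharf_prime pR).
have PJ : forall x, gen (@whole S) (fun s => exists r, I r /\ s = f r) x ->
    forall s, P (s * x ^+ q).
  apply: gen_ind.
  - by move=> s; rewrite expr0n eqn0Ngt q0 mulr0.
  - move=> x y hx hy s; rewrite frobD // mulrDr; exact: PD.
  - move=> b y _ [r [Ir ->]] s; rewrite exprMn -rmorphXn mulrA; exact: Pbase.
have Pfrob : forall w, frob (@whole S)
    (gen (@whole S) (fun s => exists r, I r /\ s = f r)) q w -> P w.
  apply: gen_ind => //; move=> b y _ [x [Jx ->]]; exact: PJ.
have := Pfrob _ (He e he); rewrite /P => [[a [Ha ea]]].
case: bs h0 hs hind ea {hsp hall P P0 PD Pbase PJ Pfrob} => // b0 bs' h0 _ hind ea.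
have e2 : \sum_(i < size (b0 :: bs'))
    f (if i == 0%N :> nat then D * z ^+ q else 0) * (b0 :: bs')`_i = f D * (c * f z ^+ q).
  rewrite big_ord_recl /= big1 ?addr0; last by move=> i _; rewrite rmorph0 mul0r.
  by rewrite -h0 /= rmorphM rmorphXn; ring.
have hs : \sum_(i < size (b0 :: bs'))
    f (a i - (if i == 0%N :> nat then D * z ^+ q else 0)) * (b0 :: bs')`_i = 0.
  under eq_bigr => i _ do rewrite rmorphB mulrBl.
  by rewrite sumrB e2 -ea subrr.
have := hind (fun i => a i - (if i == 0%N :> nat then D * z ^+ q else 0)) hs 0%N isT.
move=> /eqP; rewrite /= subr_eq0 => /eqP <-; exact: Ha.
Qed.

Lemma Unz (A : idomainType) (U : A -> Prop) u : ~ U 0 -> U u -> u != 0.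
Proof. by move=> h0 hu; apply/eqP => e; apply: h0; rewrite -e. Qed.

Lemma loc0 (A : idomainType) (U : A -> Prop) : mult_system U -> loc U 0.
Proof. by move=> [U1 _]; exists 0, 1; split => //; rewrite tofrac0 mul0r. Qed.

Lemma loc_tf (A : idomainType) (U : A -> Prop) a : mult_system U -> loc U (tf a).
Proof. by move=> [U1 _]; exists a, 1; split => //; rewrite tofrac1 divr1. Qed.

Lemma loc1 (A : idomainType) (U : A -> Prop) : mult_system U -> loc U 1.
Proof. by move=> hU; rewrite -tofrac1; apply: loc_tf. Qed.

Lemma locD (A : idomainType) (U : A -> Prop) : mult_system U -> ~ U 0 ->
  forall x y, loc U x -> loc U y -> loc U (x + y).
Proof.
move=> [U1 UM] U0 x y [a [u [hu ->]]] [b [v [hv ->]]].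
exists (a * v + b * u), (u * v); split; first exact: UM.
by rewrite addf_div ?tf_neq0 ?(Unz U0) // rmorphD !rmorphM.
Qed.

Lemma locM (A : idomainType) (U : A -> Prop) : mult_system U ->
  forall x y, loc U x -> loc U y -> loc U (x * y).
Proof.
move=> [U1 UM] x y [a [u [hu ->]]] [b [v [hv ->]]].
exists (a * b), (u * v); split; first exact: UM.
by rewrite mulf_div !rmorphM.
Qed.

Close Scope quotient_scope.
Unset Implicit Arguments.

Theorem lemma2 (p : nat) (R S : idomainType) (f : {rmorphism R -> S}) :
  p \in [pchar R] ->
  noetherian R ->
  injective f ->
  module_finite f ->
  tc_commutes_with_loc p S ->
  tc_commutes_with_loc p R.
Proof.
move=> pR _ finj mf hS I U hI hU hU0 y.
have pS : p \in [pchar S] := rmorph_pchar f pR.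
have pF : p \in [pchar {fraction R}] := rmorph_pchar (@FracField.tofrac R) pR.
have pFS : p \in [pchar {fraction S}] := rmorph_pchar (@FracField.tofrac S) pS.
have LD := locD hU hU0; have LM := locM hU.
split.
-
  apply: gen_ind.
  + by apply: tc0 => //; [exact: loc0 | exact: loc1].
  + by move=> u v hu hv; apply: tcD.
  move=> b x Lb [z [hz ->]]; apply: tcM => //; first exact: loc1.
  case: hz => [_ [c [_ [Hc [e0 He]]]]].
  have c0 : c != 0 by apply: (@nz_of_minprime _ (@whole R)).
  split; first exact: loc_tf.
  exists (tf c); split; first exact: loc_tf.
  split; first by apply: minprime_nz; [exact: loc0 | exact: tf_neq0].
  exists e0 => e he; rewrite -rmorphXn -rmorphM.
  apply: (gen_map (phi := @FracField.tofrac R)) (He e he).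
  + exact: rmorphD.
  + exact: rmorph0.
  + exact: rmorphM.
  + by move=> ? _; apply: loc_tf.
  move=> w [x0 [Ix ->]]; exists (tf x0); split; last exact: rmorphXn.
  by rewrite -[tf x0]mul1r; apply: gen1; [exact: loc1 | exists x0].
-
  move=> hy.
  set US := fun s => exists u, U u /\ s = f u.
  set J := gen (@whole S) (fun s => exists r, I r /\ s = f r).
  have hJ : is_ideal (@whole S) J.
    split => //; split; first exact: gen0.
    by split; [move=> ??; apply: genD | move=> ???; apply: genM].
  have hUS : mult_system US.
    case: hU => U1 UM; split; first by exists 1; rewrite rmorph1.
    by move=> _ _ [u [hu ->]] [v [hv ->]]; exists (u * v); rewrite rmorphM; split => //; apply: UM.
  have hUS0 : ~ US 0.
    by move=> [u [hu e]]; apply: hU0; have <- : u = 0 by apply: finj; rewrite -e rmorph0.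
  have Lmap : forall x, loc U x -> loc US (Fm f x).
    move=> x [a [u [hu ->]]]; rewrite Fm_eq // ?(Unz hU0) //.
    by exists (f a), (f u); split => //; exists u.
  have Gmap : forall x, gen (loc U) (fimg I) x -> gen (loc US) (fimg J) (Fm f x).
    apply: gen_map; [exact: Fm_add | exact: Fm0 | exact: Fm_mul | exact: Lmap |].
    move=> x [r [Ir ->]]; exists (f r); split; last exact: Fm_tf.
    by rewrite -[f r]mul1r; apply: gen1 => //; exists r.
  have htc : tight_closure p (loc US) (gen (loc US) (fimg J)) (Fm f y).
    case: hy => [Ly [c [Lc [Hc [e0 He]]]]].
    split; first exact: Lmap.
    exists (Fm f c); split; first exact: Lmap.
    split.
      apply: minprime_nz; first exact: loc0.
      by apply: Fm_nz => //; apply: (nz_of_minprime (loc0 hU)).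
    exists e0 => e he; rewrite -FmX // -Fm_mul //.
    apply: (gen_map (phi := Fm f)) (He e he); [exact: Fm_add | exact: Fm0 | exact: Fm_mul | exact: Lmap |].
    by move=> w [x [Gx ->]]; exists (Fm f x); split; [exact: Gmap | exact: FmX].
  have hgen := (hS J US hJ hUS hUS0 (Fm f y)).2 htc.
  have [u [w [Uu [Tw ew]]]] : exists u w, U u /\ tight_closure p (@whole S) J w /\
      tf (f u) * Fm f y = tf w.
    move: hgen; apply: (gen_ind (P := fun v => exists u w, U u /\ tight_closure p (@whole S) J w /\ tf (f u) * v = tf w)).
    + exists 1, 0; split; first by case: hU.
      split; first exact: tc0.
      by rewrite mulr0 tofrac0.
    + move=> v1 v2 [u1 [w1 [hu1 [hw1 e1]]]] [u2 [w2 [hu2 [hw2 e2]]]].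
      exists (u1 * u2), (f u2 * w1 + f u1 * w2); split; first by case: hU => _; apply.
      split; first by apply: tcD => //; apply: tcM.
      by rewrite (rmorphM f) tofracD !tofracM -e1 -e2; ring.
    move=> b x [s [su [[u1 [hu1 ->]] ->]]] [w1 [hw1 ->]].
    exists u1, (s * w1); split => //; split; first exact: tcM.
    rewrite mulrA [tf (f u1) * _]mulrC divfK ?rmorphM //.
    by apply: tf_neq0; apply: fnz => //; apply: (Unz hU0).
  case: hy => [[a [t [Ut ey]]] _].
  have t0 := Unz hU0 Ut; have u0 := Unz hU0 Uu.
  rewrite ey Fm_eq // in ew.
  have ef : f (u * a) = f t * w.
    apply/eqP; rewrite -tofrac_eq; apply/eqP.
    rewrite (rmorphM f) !tofracM -ew mulrCA [tf (f t) * _]mulrC divfK //.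
    by apply: tf_neq0; apply: fnz.
  have Tua : tight_closure p (@whole R) I (u * a).
    apply: (contraction pR finj mf); rewrite ef; exact: tcM.
  rewrite ey.
  have -> : tf a / tf t = (tf 1 / tf (u * t)) * tf (u * a).
    rewrite tofrac1 mul1r [_^-1 * _]mulrC !tofracM -mulf_div divff ?mul1r //.
    exact: tf_neq0.
  apply: gen1; last by exists (u * a).
  by exists 1, (u * t); split => //; case: hU => _; apply.
Qed.
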